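(* Let $N$ and $\Delta$ be integers with $\frac{N}{2} < \Delta \le N$. Then for every integer $M$ with $\binom{\Delta}{2} \le M \le f(N,\Delta)$, the pair $(N,M)$ is feasible for the family of all line graphs.
   Context: All graphs are finite and simple; $L(G)$ is the line graph of $G$; $e(\cdot)$, $\Delta(\cdot)$, $\delta(\cdot)$ denote number of edges, maximum degree and minimum degree. For integers $N \ge \Delta \ge 1$, $f(N,\Delta) = \max\{ e(L(G)) : e(G)=N, \Delta(G)=\Delta, \delta(G)\geq 1\}$. A pair $(N,M)$ is feasible (for the family of all line graphs) if there exists a graph $G$ such that $L(G)$ has exactly $N$ vertices and exactly $M$ edges. *)

(* Defs.v *)
From mathcomp Require Import all_boot.
Set Implicit Arguments. Unset Strict Implicit. Unset Printing Implicit Defensive.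

Record sgraph := SGraph {
  vtx : finType;
  adj : rel vtx;
  adj_sym : symmetric adj;
  adj_irr : irreflexive adj }.

Definition edges (G : sgraph) : {set {set vtx G}} :=
  [set e | [exists x, exists y, adj x y && (e == [set x; y])]].

Definition nedges (G : sgraph) : nat := #|edges G|.

Definition deg (G : sgraph) (v : vtx G) : nat := #|[set e in edges G | v \in e]|.

Definition maxdeg (G : sgraph) : nat := \max_(v : vtx G) deg v.

Definition mindeg_ge1 (G : sgraph) : Prop := forall v : vtx G, 0 < deg v.

Definition Lvtx (G : sgraph) : finType := {e : {set vtx G} | e \in edges G}.

Definition Ladj (G : sgraph) : rel (Lvtx G) :=
  fun e1 e2 => (e1 != e2) && ~~ [disjoint val e1 & val e2].

Lemma Ladj_sym G : symmetric (@Ladj G).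
Proof. by move=> e1 e2; rewrite /Ladj eq_sym disjoint_sym. Qed.

Lemma Ladj_irr G : irreflexive (@Ladj G).
Proof. by move=> e; rewrite /Ladj eqxx. Qed.

Definition line_graph (G : sgraph) : sgraph := SGraph (@Ladj_sym G) (@Ladj_irr G).

(* is_f N D m : m = f(N, D) = max { e(L(G)) : e(G) = N, Delta(G) = D, delta(G) >= 1 } *)
Definition admissible (N D : nat) (G : sgraph) : Prop :=
  [/\ nedges G = N, maxdeg G = D & mindeg_ge1 G].

Definition is_f (N D m : nat) : Prop :=
  (exists G, admissible N D G /\ nedges (line_graph G) = m) /\
  (forall G, admissible N D G -> nedges (line_graph G) <= m).

Definition feasible (N M : nat) : Prop :=
  exists G : sgraph, #|vtx (line_graph G)| = N /\ nedges (line_graph G) = M.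

(* Main.v *)
Require Import Defs.
From mathcomp Require Import all_boot.
From mathcomp Require Import zify.
Set Implicit Arguments. Unset Strict Implicit. Unset Printing Implicit Defensive.

Section Gen.
Variable V : finType.
Implicit Types (F : {set {set V}}) (v : V).

Definition two_sets F := forall e, e \in F -> #|e| = 2.
Definition dg F v := #|[set e in F | v \in e]|.
Definition Phi F := \sum_v dg F v * (dg F v).-1.
Definition pairsF F := [set p : {set V} * {set V} |
  [&& p.1 \in F, p.2 \in F, p.1 != p.2 & ~~ [disjoint p.1 & p.2]]].

Lemma card_sum (T : finType) (A : {set T}) : #|A| = \sum_x (x \in A).
Proof.
by rewrite -sum1_card big_mkcond; apply: eq_bigr => x _; case: (x \in A).
Qed.

Lemma dgE F v : dg F v = \sum_(e in F) (v \in e).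
Proof.
rewrite /dg -sum1_card [RHS]big_mkcond [LHS]big_mkcond.
by apply: eq_bigr => e _; rewrite inE; case: (e \in F); case: (v \in e).
Qed.

Lemma handshake F : two_sets F -> \sum_v dg F v = 2 * #|F|.
Proof.
move=> tF.
rewrite (eq_bigr _ (fun v _ => dgE F v)) exchange_big /=.
rewrite (eq_bigr (fun _ => 2)); first by rewrite sum_nat_const mulnC.
by move=> e he; rewrite -(tF e he) card_sum.
Qed.

Lemma card_offdiag (A : {set {set V}}) :
  #|[set p : {set V} * {set V} | (p.1 \in A) && (p.2 \in A) && (p.1 != p.2)]|
  = #|A| * #|A|.-1.
Proof.
set S := [set p : {set V} * {set V} | (p.1 \in A) && (p.2 \in A) && (p.1 != p.2)].
have -> : #|S| = \sum_a \sum_b ((a, b) \in S).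
  by rewrite card_sum pair_bigA; apply: eq_bigr => -[a b].
rewrite (eq_bigr (fun a => (a \in A) * #|A|.-1)).
  by rewrite -big_distrl /= -card_sum.
move=> a _; rewrite (cardsD1 a A); case: (boolP (a \in A)) => ha /=.
  rewrite mul1n /= [RHS]card_sum; apply: eq_bigr => b _.
  by rewrite !inE /= ha /= eq_sym andbC.
by rewrite mul0n big1 // => b _; rewrite inE /= (negbTE ha).
Qed.


Lemma inter_le1 F e1 e2 : two_sets F -> e1 \in F -> e2 \in F -> e1 != e2 ->
  #|e1 :&: e2| <= 1.
Proof.
move=> tF h1 h2 hne; rewrite leqNgt; apply/negP => h.
have E1 : e1 :&: e2 = e1 by apply/eqP; rewrite eqEcard subsetIl (tF _ h1).
have E2 : e1 :&: e2 = e2 by apply/eqP; rewrite eqEcard subsetIr (tF _ h2).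
by move: hne; rewrite -{1}E1 E2 eqxx.
Qed.

Lemma Phi_pairs F : two_sets F -> Phi F = #|pairsF F|.
Proof.
move=> tF; rewrite /Phi /dg.
rewrite (eq_bigr (fun v => \sum_p (p \in [set p : {set V} * {set V} |
   (p.1 \in [set e in F | v \in e]) && (p.2 \in [set e in F | v \in e]) && (p.1 != p.2)])));
  last by move=> v _; rewrite -card_offdiag card_sum.
rewrite exchange_big /= [RHS]card_sum; apply: eq_bigr => p _.
rewrite !inE.
case: (boolP (p.1 \in F)) => h1 /=; last by rewrite big1 // => v _; rewrite !inE (negbTE h1).
case: (boolP (p.2 \in F)) => h2 /=; last by rewrite big1 // => v _; rewrite !inE (negbTE h2) /= andbF.
case: (boolP (p.1 != p.2)) => hne /=; last by rewrite big1 // => v _; rewrite !inE (negbTE hne) /= andbF.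
rewrite (eq_bigr (fun v => nat_of_bool (v \in p.1 :&: p.2))); last first.
  by move=> v _; rewrite !inE h1 h2 hne /= andbT.
have := inter_le1 tF h1 h2 hne.
rewrite -setI_eq0 -cards_eq0 card_sum.
by case: (\sum_v _) => [|[|]].
Qed.

End Gen.

Lemma two_sets_edges (G : sgraph) : two_sets (edges G).
Proof.
move=> e; rewrite inE => /existsP [x /existsP [y /andP [hxy /eqP ->]]].
rewrite cards2; case: eqP => // exy; by move: hxy; rewrite exy adj_irr.
Qed.

Lemma deg_nbr (G : sgraph) (v : vtx G) : deg v = #|[set u | adj v u]|.
Proof.
rewrite /deg.
have -> : [set e in edges G | v \in e] = [set [set v; u] | u in [set u | adj v u]].
  apply/setP => e; rewrite !inE; apply/andP/imsetP.
    case=> /existsP [x /existsP [y /andP [hxy /eqP ->]]].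
    rewrite !inE => /orP [] /eqP ->.
      by exists y; rewrite ?inE.
    by exists x; rewrite ?inE 1?adj_sym // setUC.
  case=> u; rewrite inE => hu ->; split; last by rewrite !inE eqxx.
  by apply/existsP; exists v; apply/existsP; exists u; rewrite hu eqxx.
apply: card_in_imset => u1 u2; rewrite !inE => h1 h2 e.
have : u1 \in [set v; u2] by rewrite -e !inE eqxx orbT.
rewrite !inE => /orP [/eqP ev|/eqP //].
by move: h1; rewrite ev adj_irr.
Qed.

Lemma handshake_G (G : sgraph) :
  2 * nedges G = #|[set p : vtx G * vtx G | adj p.1 p.2]|.
Proof.
rewrite /nedges -handshake; last exact: two_sets_edges.
rewrite card_sum.
have -> : \sum_p (p \in [set p : vtx G * vtx G | adj p.1 p.2])
   = \sum_v \sum_u ((v, u) \in [set p : vtx G * vtx G | adj p.1 p.2]).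
  by rewrite pair_bigA; apply: eq_bigr => -[a b].
apply: eq_bigr => v _.
rewrite [dg _ _]deg_nbr card_sum; apply: eq_bigr => u _.
by rewrite !inE.
Qed.

Lemma card_Lvtx (G : sgraph) : #|vtx (line_graph G)| = nedges G.
Proof. by rewrite /= card_sig. Qed.

Lemma Lpairs (G : sgraph) :
  #|[set p : Lvtx G * Lvtx G | Ladj p.1 p.2]| = #|pairsF (edges G)|.
Proof.
pose f := fun p : Lvtx G * Lvtx G => ((val p.1, val p.2) : {set vtx G} * {set vtx G}).
have finj : injective f.
  by move=> [a b] [c d] [/val_inj -> /val_inj ->].
rewrite -(card_imset _ finj); apply: eq_card => q.
apply/imsetP/idP.
  case=> p; rewrite inE /Ladj => /andP [hne hdis] ->.
  by rewrite inE /= !(valP p.1) !(valP p.2) val_eqE hne.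
rewrite inE => /and4P [h1 h2 hne hdis].
exists (Sub q.1 h1, Sub q.2 h2); last by move: h1 h2 {hne hdis}; case: q.
by rewrite inE /Ladj /= -val_eqE !SubK hne.
Qed.

Lemma LG (G : sgraph) : 2 * nedges (line_graph G) = Phi (edges G).
Proof.
by rewrite handshake_G Lpairs Phi_pairs //; exact: two_sets_edges.
Qed.

Section Bound.
Variable V : finType.
Implicit Types (F : {set {set V}}) (v : V).

Lemma sum_eq_pt (v0 : V) K : \sum_u (u == v0) * K = K.
Proof.
by rewrite (bigD1 v0) //= eqxx mul1n big1 ?addn0 // => u /negbTE ->.
Qed.

Lemma Phi_bound F v0 : two_sets F ->
  Phi F <= dg F v0 * (dg F v0).-1 + (#|F| - dg F v0) * (#|F| - dg F v0).-1
           + 4 * (#|F| - dg F v0).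
Proof.
move=> tF.
set S := [set e in F | v0 \in e]; set T := [set e in F | v0 \notin e].
have cT : #|T| = #|F| - dg F v0.
  rewrite -(cardsID [set e : {set V} | v0 \in e] F) /dg.
  have -> : F :&: [set e : {set V} | v0 \in e] = S by apply/setP => e; rewrite !inE.
  have -> : F :\: [set e : {set V} | v0 \in e] = T by apply/setP => e; rewrite !inE andbC.
  by rewrite addKn.
have tT : two_sets T by move=> e; rewrite inE => /andP [/tF].
have dsplit u : dg F u = dg S u + dg T u.
  rewrite !dgE [LHS](bigID [pred e : {set V} | v0 \in e]) /=; congr (_ + _); apply: eq_bigl => e;
  by rewrite !inE.
have dS u : u != v0 -> dg S u <= 1.
  move=> huv; rewrite -(cards1 [set v0; u]) /dg; apply: subset_leq_card.
  apply/subsetP => e; rewrite !inE => /andP [/andP [heF hv0] hu].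
  suff /eqP -> : [set v0; u] == e by rewrite eqxx.
  by rewrite eqEcard (tF _ heF) cards2 eq_sym huv subUset !sub1set hv0 hu.
have dT0 : dg T v0 = 0.
  apply/eqP; rewrite cards_eq0; apply/eqP/setP => e; rewrite !inE.
  by case: (v0 \in e); rewrite ?andbF.
have pt u : dg F u * (dg F u).-1 <=
    (u == v0) * (dg F v0 * (dg F v0).-1) + (dg T u * (dg T u).-1 + 2 * dg T u).
  case: (eqVneq u v0) => [->|huv]; first by rewrite dT0 mul1n; lia.
  rewrite mul0n add0n dsplit.
  have := dS u huv; case: (dg S u) => [|[|]] // _; first by rewrite add0n leq_addr.
  by case: (dg T u) => [|b] //=; nia.
rewrite {1}/Phi; apply: leq_trans; first by apply: leq_sum => u _; exact: pt.
rewrite big_split /= sum_eq_pt big_split /= -big_distrr /= handshake // -addnA leq_add2l.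
rewrite -cT mulnA leq_add2r.
rewrite -/(Phi T) Phi_pairs // -card_offdiag; apply: subset_leq_card.
by apply/subsetP => p; rewrite !inE => /and4P [-> -> -> _].
Qed.

End Bound.

Section Stars.
Variable V : finType.
Implicit Types (F : {set {set V}}) (v c w x y : V) (X L : {set V}).

Lemma disjP' (T : finType) (A B : {set T}) :
  (forall a : T, a \in A -> a \in B -> False) -> [disjoint A & B].
Proof.
move=> h; rewrite -setI_eq0; apply/eqP/setP => a; rewrite !inE.
by apply/negP => /andP [ha hb]; exact: h a ha hb.
Qed.

Definition star c X : {set {set V}} := [set [set c; x] | x in X].

Lemma star_inj c X : c \notin X -> {in X &, injective (fun x => [set c; x])}.
Proof.
move=> hc x1 x2 h1 h2 e.
have : x1 \in [set c; x2] by rewrite -e !inE eqxx orbT.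
rewrite !inE => /orP [/eqP ex|/eqP //].
by move: hc; rewrite -ex h1.
Qed.

Lemma star_two c X : c \notin X -> two_sets (star c X).
Proof.
move=> hc e /imsetP [x hx ->]; rewrite cards2.
suff -> : c != x by [].
by apply: contraNneq hc => ->.
Qed.

Lemma card_star c X : c \notin X -> #|star c X| = #|X|.
Proof. by move=> hc; apply: card_in_imset; exact: star_inj. Qed.

Lemma dg_star c X v : c \notin X ->
  dg (star c X) v = if v == c then #|X| else v \in X.
Proof.
move=> hc; rewrite dgE big_imset /=; last exact: star_inj.
case: eqP => [->|/eqP hvc].
  by rewrite -sum1_card; apply: eq_bigr => x _; rewrite !inE eqxx.
rewrite (eq_bigr (fun x => nat_of_bool (v == x))); last first.
  by move=> x _; rewrite !inE (negbTE hvc).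
case: (boolP (v \in X)) => hv.
  rewrite (bigD1 v) //= eqxx big1 // => x /andP [_ hx].
  by rewrite eq_sym (negbTE hx).
by rewrite big1 // => x hx; case: eqP hv => // ->; rewrite hx.
Qed.

Lemma dg_union F1 F2 v : [disjoint F1 & F2] ->
  dg (F1 :|: F2) v = dg F1 v + dg F2 v.
Proof.
move=> hd; rewrite !dgE -bigU //; apply: eq_bigl => e; by rewrite !inE.
Qed.

Lemma card_union F1 F2 : [disjoint F1 & F2] -> #|F1 :|: F2| = #|F1| + #|F2|.
Proof.
by move=> hd; rewrite cardsU; move: hd; rewrite -setI_eq0 => /eqP ->; rewrite cards0 subn0.
Qed.

Lemma two_union F1 F2 : two_sets F1 -> two_sets F2 -> two_sets (F1 :|: F2).
Proof. by move=> t1 t2 e; rewrite inE => /orP [/t1|/t2]. Qed.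

Lemma disj_stars c w L X : c \notin X -> c != w ->
  [disjoint star c L & star w X].
Proof.
move=> hcX hcw; apply: disjP' => e /imsetP [x hx ->] /imsetP [y hy e2].
have : c \in [set w; y] by rewrite -e2 !inE eqxx.
rewrite !inE (negbTE hcw) /= => /eqP ecy.
by move: hcX; rewrite ecy hy.
Qed.

Lemma Phi_two_stars c w L X : c \notin L -> c \notin X -> w \in L -> w \notin X ->
  c != w ->
  Phi (star c L :|: star w X) = #|L| * #|L|.-1 + #|X|.+1 * #|X| + 2 * #|L :&: X|.
Proof.
move=> hcL hcX hwL hwX hcw.
have hd := disj_stars L hcX hcw.
have pt v : dg (star c L :|: star w X) v * (dg (star c L :|: star w X) v).-1 =
   (v == c) * (#|L| * #|L|.-1) + (v == w) * (#|X|.+1 * #|X|) + 2 * (v \in L :&: X).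
  rewrite dg_union // !dg_star //.
  case: (eqVneq v c) => [->|hvc].
    by rewrite (negbTE hcw) (negbTE hcX) inE (negbTE hcL) /=; lia.
  case: (eqVneq v w) => [->|hvw].
    by rewrite inE hwL (negbTE hwX) /=; lia.
  rewrite inE /=; case: (v \in L); case: (v \in X) => /=; lia.
rewrite /Phi (eq_bigr _ (fun v _ => pt v)) !big_split /= !sum_eq_pt.
by rewrite -card_sum big1 //; lia.
Qed.

Lemma add_fresh F x y : two_sets F -> x != y -> dg F x = 0 -> dg F y = 0 ->
  [/\ two_sets (star x [set y] :|: F), #|star x [set y] :|: F| = #|F|.+1
    & Phi (star x [set y] :|: F) = Phi F].
Proof.
move=> tF hxy hx hy.
have hxn : x \notin [set y] by rewrite inE.
have hd : [disjoint star x [set y] & F].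
  apply: disjP' => e /imsetP [z]; rewrite inE => /eqP -> -> he.
  move/eqP: hx; rewrite cards_eq0 => /eqP /setP /(_ [set x; y]).
  by rewrite !inE he eqxx.
split.
- by apply: two_union => //; exact: star_two.
- by rewrite card_union // card_star // cards1.
rewrite /Phi; apply: eq_bigr => v _; rewrite dg_union // dg_star // inE.
case: (eqVneq v x) => [->|hvx]; first by rewrite hx cards1.
case: (eqVneq v y) => [evy|hvy]; first by rewrite evy hy.
by [].
Qed.

End Stars.

Section Ord.
Variable n : nat.
Notation V := ('I_n.+1).
Implicit Types (F : {set {set V}}).

Definition itv a b : {set V} := [set v : V | a <= v < b].

Lemma card_itv a b : b <= n.+1 -> #|itv a b| = b - a.
Proof.
elim: b => [|b IH] hb.
  apply/eqP; rewrite cards_eq0; apply/eqP/setP => v; by rewrite !inE ltn0 andbF.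
have hbn : b < n.+1 by [].
case: (leqP a b) => hab.
  have -> : itv a b.+1 = inord b |: itv a b.
    apply/setP => v; rewrite !inE -val_eqE /= inordK //.
    case: (ltngtP v b) => hv; rewrite ?ltnS ?hv ?andbT ?andbF ?orbF /=.
    - by rewrite (ltnW hv) andbT.
    - by rewrite [v <= b]leqNgt hv andbF.
    - by rewrite leqnn hab.
  rewrite cardsU1 IH ?(ltnW hb) // !inE inordK // ltnn andbF /=; lia.
have -> : itv a b.+1 = set0.
  apply/setP => v; rewrite !inE; apply/negP => /andP [h1 h2]; lia.
rewrite cards0; lia.
Qed.

Definition supp F a := forall e, e \in F -> forall v : V, v \in e -> v < a.

Lemma dg_supp F a (v : V) : supp F a -> a <= v -> dg F v = 0.
Proof.
move=> sF hv; apply/eqP; rewrite cards_eq0; apply/eqP/setP => e; rewrite !inE.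
apply/negP => /andP [he hve]; have := sF e he v hve; lia.
Qed.

Lemma pad F a m : two_sets F -> supp F a -> a + 2 * m <= n.+1 ->
  exists F', [/\ two_sets F', #|F'| = #|F| + m & Phi F' = Phi F].
Proof.
elim: m F a => [|m IH] F a tF sF hb; first by exists F; rewrite addn0.
have ha : a < n.+1 by lia.
have ha1 : a.+1 < n.+1 by lia.
pose x : V := inord a; pose y : V := inord a.+1.
have vx : x = a :> nat by rewrite /x inordK.
have vy : y = a.+1 :> nat by rewrite /y inordK.
have hxy : x != y.
  by apply/negP => /eqP exy; have := congr1 (@nat_of_ord _) exy; rewrite vx vy; lia.
have h0x : a <= x by rewrite vx.
have h0y : a <= y by rewrite vy.
have [t1 c1 p1] := add_fresh tF hxy (dg_supp sF h0x) (dg_supp sF h0y).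

have s1 : supp (star x [set y] :|: F) a.+2.
  move=> e; rewrite inE => /orP [/imsetP [z]|he v hv].
    rewrite inE => /eqP -> -> v; rewrite !inE => /orP [] /eqP ->.
      by rewrite vx; lia.
    by rewrite vy.
  by have := sF e he v hv; lia.
have [F' [t' c' p']] := IH _ _ t1 s1 (ltac:(lia)).
by exists F'; rewrite c' c1 p' p1; split => //; lia.
Qed.

End Ord.

Lemma construct n D s j m : 1 <= D -> j <= s -> j < D ->
  D.+1 + (s - j) + 2 * m <= n.+1 ->
  exists F : {set {set 'I_n.+1}},
    [/\ two_sets F, #|F| = D + s + m & Phi F = D * D.-1 + s.+1 * s + 2 * j].
Proof.
move=> hD hjs hjD hb.
pose c : 'I_n.+1 := inord 0; pose w : 'I_n.+1 := inord D.
have vc : c = 0 :> nat by rewrite /c inordK.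
have vw : w = D :> nat by rewrite /w inordK //; lia.
pose L := itv n 1 D.+1.
pose X := itv n (D - j) D :|: itv n D.+1 (D.+1 + (s - j)).
have memX (v : 'I_n.+1) : (v \in X) = ((D - j <= v < D) || (D.+1 <= v < D.+1 + (s - j))).
  by rewrite !inE.
have memL (v : 'I_n.+1) : (v \in L) = (1 <= v < D.+1) by rewrite !inE.
have hcL : c \notin L by rewrite memL vc.
have hcX : c \notin X by rewrite memX vc; apply/negP => /orP [] /andP [h1 h2]; lia.
have hwL : w \in L by rewrite memL vw; apply/andP; split; lia.
have hwX : w \notin X by rewrite memX vw; apply/negP => /orP [] /andP [h1 h2]; lia.
have hcw : c != w.
  by apply/negP => /eqP e; have := congr1 (@nat_of_ord _) e; rewrite vc vw; lia.
have cL : #|L| = D by rewrite card_itv; lia.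
have cX : #|X| = s.
  rewrite cardsU !card_itv; try lia.
  have -> : itv n (D - j) D :&: itv n D.+1 (D.+1 + (s - j)) = set0.
    apply/setP => v; rewrite !inE; apply/negP => /andP [/andP [h1 h2] /andP [h3 h4]]; lia.
  rewrite cards0; lia.
have cLX : #|L :&: X| = j.
  have -> : L :&: X = itv n (D - j) D.
    apply/setP => v; rewrite inE memL memX !inE.
    case: (leqP (D - j) v) => h1; case: (ltnP v D) => h2;
      case: (leqP D.+1 v) => h3 /=; rewrite ?andbF ?andbT //=; try lia.
  by rewrite card_itv; lia.
set F0 := star c L :|: star w X.
have t0 : two_sets F0 by apply: two_union; exact: star_two.
have c0 : #|F0| = D + s by rewrite card_union ?card_star ?cL ?cX //; exact: disj_stars.
have p0 : Phi F0 = D * D.-1 + s.+1 * s + 2 * j by rewrite Phi_two_stars // cL cX cLX.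
have s0 : supp F0 (D.+1 + (s - j)).
  move=> e; rewrite inE => /orP [] /imsetP [x hx ->] v; rewrite !inE => /orP [] /eqP ->.
  - by rewrite vc.
  - by move: hx; rewrite memL => /andP [_ h]; lia.
  - by rewrite vw; lia.
  - by move: hx; rewrite memX => /orP [] /andP [h1 h2]; lia.
have [F' [t' c' p']] := pad t0 s0 hb.
by exists F'; rewrite c' c0 p' p0.
Qed.

Definition gadj (V : finType) (F : {set {set V}}) : rel V :=
  fun x y => (x != y) && ([set x; y] \in F).
Lemma gadj_sym (V : finType) (F : {set {set V}}) : symmetric (gadj F).
Proof. by move=> x y; rewrite /gadj eq_sym setUC. Qed.
Lemma gadj_irr (V : finType) (F : {set {set V}}) : irreflexive (gadj F).
Proof. by move=> x; rewrite /gadj eqxx. Qed.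
Definition gF (V : finType) (F : {set {set V}}) : sgraph :=
  SGraph (gadj_sym F) (gadj_irr F).

Lemma edges_gF (V : finType) (F : {set {set V}}) : two_sets F -> edges (gF F) = F.
Proof.
move=> tF; apply/setP => e; rewrite inE; apply/existsP/idP.
  by case=> x /existsP [y /andP [/andP [_ h] /eqP ->]].
move=> he; have /cards2P [x [y [hxy exy]]] : #|e| == 2 by rewrite tF.
exists x; apply/existsP; exists y; rewrite /= /gadj hxy -exy he.
by rewrite exy eqxx.
Qed.

Lemma bin2_double k : 2 * 'C(k, 2) = k * k.-1.
Proof.
elim: k => [|k IH] //; rewrite binS bin1 mulnDr IH.
by case: k {IH} => //= k; nia.
Qed.

Lemma repr R t : t <= 'C(R, 2) + 2 * R ->
  exists s j, [/\ j <= s, s <= R & t = 'C(s.+1, 2) + j].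
Proof.
elim: R t => [|R IH] t ht.
  by exists 0, 0; move: ht; rewrite bin0n /=; case: t.
have e1 : 'C(R.+2, 2) = 'C(R.+1, 2) + R.+1 by rewrite binS bin1.
have e2 : 'C(R.+1, 2) = 'C(R, 2) + R by rewrite binS bin1.
case: (leqP 'C(R.+2, 2) t) => h.
  by exists R.+1, (t - 'C(R.+2, 2)); split; lia.
have [s [j [h1 h2 h3]]] := IH t ltac:(lia).
by exists s, j; split; lia.
Qed.

Unset Implicit Arguments.

Theorem mainTheorem16 (N D : nat) :
  N < 2 * D -> D <= N ->
  forall fND : nat, is_f N D fND ->
  forall M : nat, 'C(D, 2) <= M -> M <= fND -> feasible N M.
Proof.
move=> hND hDN fND [[G [[hN hD hmin] hf]] _] M hM1 hM2.
have [v0 hv0] : exists v0 : vtx G, deg v0 = D.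
  case: (pickP (fun _ : vtx G => true)) => [v _|h].
    have hc : 0 < #|vtx G| by apply/card_gt0P; exists v.
    have [i0 hi] := eq_bigmax (fun i => deg i) hc.
    by exists i0; rewrite -hi -hD.
  move: hD; rewrite /maxdeg big_pred0 // => eD; lia.
have two := @two_sets_edges G.
have hb := Phi_bound v0 two.
rewrite -LG hf in hb.
change (dg (edges G) v0) with (deg v0) in hb.
rewrite hv0 in hb.
have cE : #|edges G| = N by [].
rewrite cE in hb.
set R := N - D in hb.
have hD2 := bin2_double D.
have hR2 := bin2_double R.
have ht : M - 'C(D, 2) <= 'C(R, 2) + 2 * R by nia.
have [s [j [hjs hsR et]]] := repr ht.
have hRD : R < D by rewrite /R; lia.
have [F [tF cF pF]] := @construct (N + N) D s j (R - s) ltac:(lia) hjs ltac:(lia)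
   ltac:(rewrite /R; lia).
exists (gF F); split.
  by rewrite card_Lvtx /nedges edges_gF // cF /R; lia.
have := LG (gF F); rewrite edges_gF // pF.
have := bin2_double s.+1; rewrite /=; nia.
Qed.
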